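(* Let $X$ be a proper geodesic metric space with base point $o$, and let $\epsilon\in(0,1)$. Let $\beta$ be a geodesic ray with $\beta(0)=o$ and let $\gamma$ be a $(q,Q)$-ray. Suppose there is an increasing sequence $r_1<r_2<\cdots$ with $r_n\to\infty$ such that $d(\beta(r_n),\gamma)\le\epsilon r_n$ for every $n$. Then $\gamma$ can be $(9q,Q)$-quasi-redirected to $\beta$.
   Context: A $(q,Q)$-quasi-geodesic satisfies $\frac{|s-t|}{q}-Q\le d(\alpha(s),\alpha(t))\le q|s-t|+Q$; a $(q,Q)$-ray is a $(q,Q)$-quasi-geodesic ray $\alpha\colon[0,\infty)\to X$ with $\alpha(0)=o$. A ray $\gamma'$ eventually coincides with $\beta$ if there are $t_\beta,t_{\gamma'}>0$ with $\gamma'(t)=\beta(t+t_\beta)$ for $t\ge t_{\gamma'}$. The ray $\gamma$ can be $(q',Q')$-quasi-redirected to $\beta$ if for every $r>0$ there is a $(q',Q')$-ray $\gamma'$ that coincides with $\gamma$ inside the closed ball of radius $r$ about $o$ (until $\gamma$ first leaves it) and eventually coincides with $\beta$. *)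

(* Defs.v *)
From Stdlib Require Import Reals Lra List.
Open Scope R_scope.

Record is_metric {X : Type} (d : X -> X -> R) : Prop := {
  metric_eq0 : forall x y, d x y = 0 <-> x = y;
  metric_sym : forall x y, d x y = d y x;
  metric_tri : forall x y z, d x z <= d x y + d y z
}.

Definition open_set {X : Type} (d : X -> X -> R) (U : X -> Prop) : Prop :=
  forall x, U x -> exists e, 0 < e /\ forall y, d x y < e -> U y.

Definition compact_set {X : Type} (d : X -> X -> R) (K : X -> Prop) : Prop :=
  forall (I : Type) (U : I -> X -> Prop),
    (forall i, open_set d (U i)) ->
    (forall x, K x -> exists i, U i x) ->
    exists l : list I, forall x, K x -> exists i, In i l /\ U i x.

Definition closed_ball {X : Type} (d : X -> X -> R) (x : X) (r : R) : X -> Prop :=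
  fun y => d x y <= r.

Definition proper_space {X : Type} (d : X -> X -> R) : Prop :=
  forall x r, compact_set d (closed_ball d x r).

Definition geodesic_space {X : Type} (d : X -> X -> R) : Prop :=
  forall x y, exists c : R -> X, c 0 = x /\ c (d x y) = y /\
    forall s t, 0 <= s <= d x y -> 0 <= t <= d x y -> d (c s) (c t) = Rabs (s - t).

(* Rays are functions R -> X, only their values on [0, oo) matter. *)
Definition geodesic_ray {X : Type} (d : X -> X -> R) (o : X) (b : R -> X) : Prop :=
  b 0 = o /\ forall s t, 0 <= s -> 0 <= t -> d (b s) (b t) = Rabs (s - t).

Definition quasi_geodesic_ray {X : Type} (d : X -> X -> R) (o : X) (q Q : R)
    (a : R -> X) : Prop :=
  a 0 = o /\ forall s t, 0 <= s -> 0 <= t ->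
    Rabs (s - t) / q - Q <= d (a s) (a t) <= q * Rabs (s - t) + Q.

(* d(x, gamma) <= c, where d(x, gamma) = inf_{t >= 0} d(x, gamma t). *)
Definition dist_to_ray_le {X : Type} (d : X -> X -> R) (x : X) (g : R -> X) (c : R) : Prop :=
  forall delta, 0 < delta -> exists t, 0 <= t /\ d x (g t) < c + delta.

Definition eventually_coincides {X : Type} (g' b : R -> X) : Prop :=
  exists tb tg, 0 < tb /\ 0 < tg /\ forall t, tg <= t -> g' t = b (t + tb).

Definition coincides_in_ball {X : Type} (d : X -> X -> R) (o : X) (r : R)
    (g' g : R -> X) : Prop :=
  forall t, 0 <= t -> (forall s, 0 <= s <= t -> d o (g s) <= r) -> g' t = g t.

Definition quasi_redirected {X : Type} (d : X -> X -> R) (o : X) (q' Q' : R)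
    (g b : R -> X) : Prop :=
  forall r, 0 < r -> exists g' : R -> X,
    quasi_geodesic_ray d o q' Q' g' /\ coincides_in_ball d o r g' g /\
    eventually_coincides g' b.

(* Main.v *)
Require Import Defs.
From Stdlib Require Import Reals Lra Classical.
Open Scope R_scope.

Lemma d_refl {X} (d : X -> X -> R) : is_metric d -> forall x, d x x = 0.
Proof. intros H x. apply (metric_eq0 d H). reflexivity. Qed.

Lemma d_nonneg {X} (d : X -> X -> R) : is_metric d -> forall x y, 0 <= d x y.
Proof.
  intros H x y. pose proof (metric_tri d H x y x). rewrite (d_refl d H) in H0.
  rewrite (metric_sym d H y x) in H0. lra.
Qed.

Lemma rev_tri {X} (d : X -> X -> R) : is_metric d -> forall x y z,
  Rabs (d x z - d y z) <= d x y.
Proof.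
  intros H x y z. pose proof (metric_tri d H x y z). pose proof (metric_tri d H y x z).
  rewrite (metric_sym d H y x) in H1. apply Rabs_le. lra.
Qed.

Lemma Rmax0_lip : forall x y, Rabs (Rmax 0 x - Rmax 0 y) <= Rabs (x - y).
Proof.
  intros x y. unfold Rmax. destruct (Rle_dec 0 x); destruct (Rle_dec 0 y);
  unfold Rabs; repeat destruct Rcase_abs; lra.
Qed.

Lemma lip_cont (f : R -> R) (K : R) : 0 <= K ->
  (forall x y, Rabs (f x - f y) <= K * Rabs (x - y)) -> forall x, continuity_pt f x.
Proof.
  intros HK Hf x. unfold continuity_pt, continue_in, limit1_in, limit_in.
  intros e He. exists (e / (K + 1)). split.
  - apply Rdiv_lt_0_compat; lra.
  - intros y [_ Hy]. simpl in *. unfold Rdist in *.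
    pose proof (Hf y x).
    assert (K * Rabs (y - x) <= K * (e / (K+1))) by (apply Rmult_le_compat_l; lra).
    assert (K * (e / (K+1)) < e).
    { apply Rmult_lt_reg_r with (K+1). lra. field_simplify; lra. }
    lra.
Qed.

Lemma ex_inf (f : R -> R -> R) (a : R) : 0 <= a -> (forall t S, 0 <= f t S) ->
  exists phi : R -> R, forall S,
    (forall t, 0 <= t <= a -> phi S <= f t S) /\
    (forall m, (forall t, 0 <= t <= a -> m <= f t S) -> m <= phi S).
Proof.
  intros Ha Hf.
  set (E := fun S x => exists t, 0 <= t <= a /\ x = - f t S).
  assert (Hb : forall S, bound (E S)).
  { intros S. exists 0. intros x [t [_ ->]]. specialize (Hf t S). lra. }
  assert (He : forall S, exists x, E S x).
  { intros S. exists (- f 0 S). exists 0. split; [lra|reflexivity]. }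
  exists (fun S => - proj1_sig (completeness (E S) (Hb S) (He S))).
  intros S. destruct (completeness (E S) (Hb S) (He S)) as [m [Hm1 Hm2]]. simpl.
  split.
  - intros t Ht. assert (E S (- f t S)) by (exists t; split; [lra|reflexivity]).
    specialize (Hm1 _ H). lra.
  - intros m' Hm'. assert (m <= - m').
    { apply Hm2. intros x [t [Ht ->]]. specialize (Hm' t Ht). lra. }
    lra.
Qed.

Theorem mainTheorem4 (X : Type) (d : X -> X -> R) (o : X)
  (Hmetric : is_metric d) (Hproper : proper_space d) (Hgeod : geodesic_space d)
  (eps : R) (Heps : 0 < eps < 1)
  (q Q : R) (Hq : 1 <= q) (HQ : 0 <= Q)
  (beta gamma : R -> X)
  (Hbeta : geodesic_ray d o beta) (Hgamma : quasi_geodesic_ray d o q Q gamma)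
  (r : nat -> R)
  (Hr0 : forall n, 0 <= r n)
  (Hrinc : forall n, r n < r (S n))
  (Hrinf : forall M, exists N, forall n, (N <= n)%nat -> M <= r n)
  (Hclose : forall n, dist_to_ray_le d (beta (r n)) gamma (eps * r n)) :
  quasi_redirected d o (9 * q) Q gamma beta.
Proof.
  intros r0 Hr0pos.
  destruct Hbeta as [Hb0 Hb]. destruct Hgamma as [Hg0 Hg].
  pose proof (d_nonneg d Hmetric) as dnn.
  pose proof (metric_sym d Hmetric) as dsym.
  pose proof (metric_tri d Hmetric) as dtri.
  pose (k := 2 / (1 + eps)).
  assert (Hkpos : 0 < k) by (unfold k; apply Rdiv_lt_0_compat; lra).
  assert (Hk1 : k + k * eps = 2) by (unfold k; field; lra).
  assert (Hk2 : 1 < k) by nra.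
  assert (Hk3 : k <= 2) by nra.
  assert (Hk4 : k * eps < 1) by lra.
  pose (M0 := (r0 + k + Q + 1) / (1 - k * eps)).
  destruct (Hrinf M0) as [N HN]. specialize (HN N (le_n N)).
  pose (R0 := r N).
  assert (HRbig : R0 - k * eps * R0 >= r0 + k + Q + 1).
  { assert (M0 * (1 - k * eps) = r0 + k + Q + 1) by (unfold M0; field; lra).
    assert (M0 * (1 - k*eps) <= R0 * (1 - k*eps)) by (apply Rmult_le_compat_r; unfold R0; lra).
    nra. }
  assert (HR0pos : 0 < R0).
  { assert (0 < M0) by (unfold M0; apply Rdiv_lt_0_compat; lra). unfold R0; lra. }
  destruct (Hclose N 1 Rlt_0_1) as [t1 [Ht1 Hdt1]]. fold R0 in Hdt1.
  pose (G := fun t => gamma (Rmax 0 t)).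
  pose (B := fun S => beta (Rmax 0 S)).
  pose (F := fun t S => d (G t) (B S)).
  assert (HG : forall t, 0 <= t -> G t = gamma t) by (intros; unfold G; rewrite Rmax_right; auto).
  assert (HB : forall t, 0 <= t -> B t = beta t) by (intros; unfold B; rewrite Rmax_right; auto).
  assert (HFnn : forall t S, 0 <= F t S) by (intros; apply dnn).
  destruct (ex_inf F t1 Ht1 HFnn) as [phi Hphi].
  assert (phi_lb : forall S t, 0 <= t <= t1 -> phi S <= F t S) by (intros; apply Hphi; auto).
  assert (phi_glb : forall S m, (forall t, 0 <= t <= t1 -> m <= F t S) -> m <= phi S)
    by (intros; apply Hphi; auto).
  assert (phi_lip : forall S S', phi S <= phi S' + Rabs (S - S')).
  { intros S S'. cut (phi S - Rabs (S - S') <= phi S'). lra.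
    apply phi_glb. intros t Ht. pose proof (phi_lb S t Ht).
    unfold F in *. pose proof (dtri (G t) (B S') (B S)).
    assert (d (B S') (B S) <= Rabs (S - S')).
    { unfold B. rewrite Hb by apply Rmax_l. rewrite Rabs_minus_sym. apply Rmax0_lip. }
    lra. }
  pose (psi := fun S => S - k * phi S).
  assert (psi_cont : forall S, continuity_pt psi S).
  { apply (lip_cont psi (1 + k)). lra. intros x y. unfold psi.
    pose proof (phi_lip x y). pose proof (phi_lip y x). rewrite Rabs_minus_sym in H0.
    set (A := Rabs (x - y)) in *.
    assert (-A <= x - y <= A) by (unfold A; unfold Rabs; destruct Rcase_abs; lra).
    apply Rabs_le. split; nra. }
  pose (M := q * t1 + Q).
  assert (phi_lower : forall S, 0 <= S -> S - M <= phi S).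
  { intros S HS. apply phi_glb. intros t Ht. unfold F.
    rewrite HB by lra. rewrite HG by lra.
    pose proof (dtri o (gamma t) (beta S)).
    rewrite <- Hb0 in H at 1. rewrite Hb in H by lra.
    pose proof (Hg 0 t ltac:(lra) ltac:(lra)) as [_ H2]. rewrite Hg0 in H2.
    rewrite Rabs_left1 in H by lra. rewrite Rabs_left1 in H2 by lra.
    unfold M. nra. }
  pose (S1 := Rmax R0 ((k * M - psi R0) / (k - 1))).
  destruct (continuity_ab_maj psi R0 S1 (Rmax_l _ _) (fun c _ => psi_cont c)) as [Smax [HSm1 HSm2]].
  assert (psi_max : forall S, R0 <= S -> psi S <= psi Smax).
  { intros S HS. destruct (Rle_dec S S1) as [H|H]. apply HSm1; lra.
    assert (HS1 : (k * M - psi R0) / (k - 1) <= S1) by apply Rmax_r.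
    assert ((k - 1) * ((k * M - psi R0) / (k - 1)) = k * M - psi R0) by (field; lra).
    assert ((k-1) * ((k * M - psi R0) / (k - 1)) <= (k-1) * S) by (apply Rmult_le_compat_l; lra).
    pose proof (phi_lower S ltac:(lra)).
    assert (psi S <= k * M - (k-1) * S) by (unfold psi; nra).
    pose proof (HSm1 R0 ltac:(split; [lra| apply Rmax_l])). lra. }
  assert (Kphi : forall v, 0 <= v -> phi Smax + v/2 <= phi (Smax + v)).
  { intros v Hv. pose proof (psi_max (Smax + v) ltac:(lra)). unfold psi in H.
    assert (k * (phi (Smax + v) - phi Smax) >= v) by lra.
    assert (0 <= phi (Smax + v) - phi Smax) by nra. nra. }
  assert (Ht0 : exists t0 dl, 0 <= t0 <= t1 /\ 0 <= dl <= Q /\ F t0 Smax <= phi Smax + dl).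
  { destruct (Rle_lt_or_eq_dec 0 Q HQ) as [HQp|HQ0].
    - destruct (classic (exists t, 0 <= t <= t1 /\ F t Smax < phi Smax + Q)) as [[t [Ht Ht']]|Hn].
      + exists t, Q. split; [lra|split; lra].
      + exfalso. assert (phi Smax + Q <= phi Smax); [|lra].
        apply phi_glb. intros t Ht. apply Rnot_lt_le. intro. apply Hn. exists t; auto.
    - destruct (continuity_ab_min (fun t => F t Smax) 0 t1 Ht1) as [mx [Hmx1 Hmx2]].
      { intros c _. apply (lip_cont _ q). lra. intros x y. unfold F.
        eapply Rle_trans. apply rev_tri; auto. unfold G.
        pose proof (Hg (Rmax 0 x) (Rmax 0 y) (Rmax_l _ _) (Rmax_l _ _)) as [_ H].
        pose proof (Rmax0_lip x y). rewrite <- HQ0 in H. nra. }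
      exists mx, 0. split; [lra|split; [lra|]]. rewrite Rplus_0_r. apply phi_glb. auto. }
  destruct Ht0 as [t0 [dl [Ht0 [Hdl HFt0]]]].
  assert (HSR : R0 <= Smax) by lra.
  pose (D := phi Smax).
  assert (HD0 : 0 <= D) by (apply phi_glb; intros; apply HFnn).
  assert (Hdgy : forall s v, 0 <= s <= t0 -> 0 <= v -> D + v/2 <= d (gamma s) (beta (Smax + v))).
  { intros s v Hs Hv. pose proof (Kphi v Hv). pose proof (phi_lb (Smax + v) s ltac:(lra)).
    unfold F in H0. rewrite HG, HB in H0 by lra. unfold D; lra. }
  assert (Hdgb : forall s, 0 <= s <= t0 -> D <= d (gamma s) (beta Smax)).
  { intros s Hs. pose proof (Hdgy s 0 Hs (Rle_refl _)). rewrite Rplus_0_r in H. lra. }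
  destruct (Hgeod (gamma t0) (beta Smax)) as [c [Hc0 [HcL Hc]]].
  set (p := gamma t0) in *. set (b := beta Smax) in *. set (L := d p b) in *.
  assert (HLD : D <= L <= D + dl).
  { unfold F in HFt0. rewrite HG, HB in HFt0 by lra. fold p b L in HFt0.
    split; [|unfold D; lra]. unfold L. apply Hdgb. lra. }
  assert (Hob : d o b = Smax).
  { unfold b. rewrite <- Hb0. rewrite Hb by lra. rewrite Rabs_left1 by lra. lra. }
  assert (Hball : r0 < d o p).
  { pose proof (dtri o p b). pose proof (psi_max R0 (Rle_refl _)). unfold psi in H0.
    pose proof (phi_lb R0 t1 ltac:(lra)). unfold F in H1. rewrite HG, HB in H1 by lra.
    rewrite dsym in H1. fold D in H0.
    assert (k * phi R0 <= k * (eps * R0 + 1)) by (apply Rmult_le_compat_l; lra).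
    assert ((k - 1) * D >= 0) by nra.  fold L in H. lra. }
  pose (P := fun a => if Rle_dec a L then c a else beta (Smax + (a - L))).
  assert (HL0 : 0 <= L) by apply dnn.
  assert (P0 : P 0 = p) by (unfold P; destruct Rle_dec; [auto|lra]).
  assert (Pmix : forall a a', 0 <= a <= L -> L < a' ->
     d (c a) (beta (Smax + (a' - L))) <= a' - a /\
     (a' - a)/2 - dl <= d (c a) (beta (Smax + (a' - L)))).
  { intros a a' Ha Ha'. split.
    - pose proof (dtri (c a) (c L) (beta (Smax + (a' - L)))).
      rewrite Hc in H by lra. rewrite HcL in H. unfold b in H. rewrite Hb in H by lra.
      rewrite Rabs_left1 in H by lra. rewrite (Rabs_left1 (Smax - _)) in H by lra. lra.
    - pose proof (dtri (c 0) (c a) (beta (Smax + (a' - L)))).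
      rewrite Hc in H by lra. rewrite Hc0 in H. rewrite Rabs_left1 in H by lra.
      pose proof (Hdgy t0 (a' - L) ltac:(lra) ltac:(lra)). fold p in H0. lra. }
  assert (Pbb : forall a a', L < a -> L < a' ->
     d (beta (Smax + (a - L))) (beta (Smax + (a' - L))) = Rabs (a - a')).
  { intros a a' Ha Ha'. rewrite Hb by lra. f_equal. ring. }
  assert (P_bounds : forall a a', 0 <= a -> 0 <= a' ->
     d (P a) (P a') <= Rabs (a - a') /\ Rabs (a - a') / 2 - dl <= d (P a) (P a')).
  { intros a a' Ha Ha'. unfold P.
    destruct (Rle_dec a L); destruct (Rle_dec a' L).
    - rewrite Hc by lra. split. lra. pose proof (Rabs_pos (a - a')). lra.
    - destruct (Pmix a a' ltac:(lra) ltac:(lra)). rewrite Rabs_left1 by lra. split; lra.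
    - destruct (Pmix a' a ltac:(lra) ltac:(lra)). rewrite dsym. rewrite Rabs_right by lra. split; lra.
    - rewrite Pbb by lra. split. lra. pose proof (Rabs_pos (a - a')). lra. }
  assert (GP : forall s a, 0 <= s <= t0 -> 0 <= a ->
     a/2 - dl <= d (gamma s) (P a) /\ d (gamma s) p - a <= d (gamma s) (P a) /\
     d (gamma s) (P a) <= d (gamma s) p + a).
  { intros s a Hs Ha. 
    destruct (P_bounds 0 a ltac:(lra) Ha) as [Hu _]. rewrite P0 in Hu.
    rewrite Rabs_left1 in Hu by lra.
    pose proof (dtri (gamma s) p (P a)). pose proof (dtri (gamma s) (P a) p).
    rewrite (dsym (P a) p) in H0. split; [|split; lra].
    unfold P. destruct (Rle_dec a L).
    - pose proof (dtri (gamma s) (c a) (c L)). rewrite Hc in H1 by lra. rewrite HcL in H1.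
      pose proof (Hdgb s Hs). fold b in H2. rewrite Rabs_left1 in H1 by lra. lra.
    - pose proof (Hdgy s (a - L) Hs ltac:(lra)). lra. }
  pose (U := t0 + L + 1).
  pose (alpha := fun u => u + Rmin u U).
  assert (Hal : forall u u', 0 <= u <= u' -> u' - u <= alpha u' - alpha u <= 2 * (u' - u)).
  { intros u u' Hu. unfold alpha, Rmin. destruct (Rle_dec u U); destruct (Rle_dec u' U); lra. }
  assert (Hal0 : forall u, 0 <= u -> u <= alpha u <= 2 * u).
  { intros u Hu. assert (0 <= U) by (unfold U; lra). unfold alpha, Rmin. destruct (Rle_dec u U); lra. }
  pose (g' := fun t => if Rle_dec t t0 then gamma t else P (alpha (t - t0))).
  assert (Hq9 : forall x, 0 <= x -> x / (9 * q) <= x / q /\ x / (9 * q) <= x / 9).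
  { intros x Hx. assert (x / (9 * q) = (x / q) / 9) by (field; lra).
    assert (0 <= x / q) by (apply Rmult_le_pos; [lra| left; apply Rinv_0_lt_compat; lra]).
    assert (x / q <= x).
    { unfold Rdiv. rewrite <- (Rmult_1_r x) at 2. apply Rmult_le_compat_l; auto.
      rewrite <- Rinv_1. apply Rinv_le_contravar; lra. }
    lra. }
  assert (Main : forall s t, 0 <= s <= t ->
    (t - s) / (9 * q) - Q <= d (g' s) (g' t) <= 9 * q * (t - s) + Q).
  { intros s t Hst. unfold g'.
    destruct (Rle_dec t t0) as [Ht|Ht].
    - destruct (Rle_dec s t0) as [Hs|Hs]; [|lra].
      pose proof (Hg s t ltac:(lra) ltac:(lra)) as [H1 H2].
      rewrite Rabs_left1 in H1, H2 by lra. rewrite Ropp_minus_distr in H1, H2.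
      pose proof (Hq9 (t - s) ltac:(lra)). split; nra.
    - destruct (Rle_dec s t0) as [Hs|Hs].
      + pose proof (Hal0 (t - t0) ltac:(lra)).
        destruct (GP s (alpha (t - t0)) ltac:(lra) ltac:(lra)) as [E1 [E2 E3]].
        pose proof (Hg s t0 ltac:(lra) ltac:(lra)) as [H1 H2]. fold p in H1, H2.
        rewrite Rabs_left1 in H1, H2 by lra. rewrite Ropp_minus_distr in H1, H2.
        assert (Hx : (t - s) / (9 * q) = (t0 - s) / q / 9 + (t - t0) / q / 9) by (field; lra).
        pose proof (Hq9 (t0 - s) ltac:(lra)). pose proof (Hq9 (t - t0) ltac:(lra)).
        assert (Hy1 : (t0 - s) / q / 9 = (t0 - s) / (9 * q)) by (field; lra).
        assert (Hy2 : (t - t0) / q / 9 = (t - t0) / (9 * q)) by (field; lra).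
        split; nra.
      + pose proof (Hal (s - t0) (t - t0) ltac:(lra)).
        pose proof (Hal0 (s - t0) ltac:(lra)).
        destruct (P_bounds (alpha (s - t0)) (alpha (t - t0)) ltac:(lra) ltac:(lra)) as [E1 E2].
        rewrite Rabs_left1 in E1, E2 by lra.
        pose proof (Hq9 (t - s) ltac:(lra)). split; nra. }
  exists g'. split; [|split].
  - split.
    + unfold g'. destruct (Rle_dec 0 t0); [exact Hg0|lra].
    + intros s t Hs Ht. destruct (Rle_dec s t) as [H|H].
      * rewrite Rabs_left1 by lra. rewrite Ropp_minus_distr. apply Main; lra.
      * rewrite Rabs_right by lra. rewrite dsym. apply Main; lra.
  - intros t Ht Hin. unfold g'. destruct (Rle_dec t t0) as [H|H]; [reflexivity|].
    exfalso. pose proof (Hin t0 ltac:(lra)). fold p in H0. lra.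
  - exists (Smax + 1), (t0 + U). split; [lra|split; [unfold U; lra|]].
    intros t Ht. unfold g'. destruct (Rle_dec t t0) as [H|H]. unfold U in Ht; lra.
    unfold alpha. rewrite Rmin_right by lra. unfold P.
    destruct (Rle_dec (t - t0 + U) L) as [H1|H1]. unfold U in H1; lra.
    f_equal. unfold U. ring.
Qed.
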